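(* Let $\mathcal M_{A,B,\partial}$ be an $M$-pair. Every $\partial$-boundary homologically essential element of $B$ is $\partial_B$-homologically essential. The number of $\partial$-boundary homologically essential elements of degree $k$ equals $\dim\partial_*\big(H_{k+1}(\mathbb E(A),\mathbb E(B),\partial)\big)$.
   Context: $\mathbb E$ is a field. $A=\{a_1\prec\dots\prec a_N\}$ is a finite linearly ordered set with grading $\deg:A\to\mathbb Z$, $\mathbb E(A)$ the graded vector space with basis $A$. An $M$-differential on $\mathbb E(A)$ is a degree $-1$ linear map $\partial$ with $\partial^2=0$ and $\partial(a_i)\in\mathrm{span}\{a_1,\dots,a_{i-1}\}$. For $B\subset A$ with $\partial(\mathbb E(B))\subset\mathbb E(B)$, $\mathcal M_{A,B,\partial}$ is an $M$-pair and $\partial_B=\partial|_{\mathbb E(B)}$ is an $M$-differential on $\mathbb E(B)$ (with induced order and grading). For an $M$-complex $\mathcal M_{A,\partial}$, equivalence means conjugation by a graded automorphism preserving each $\mathrm{span}\{a_1,\dots,a_i\}$; an $M$-differential is elementary if each basis element maps to $0$ or to a single basis element, and no two basis elements map to the same basis element; every $M$-differential $\partial$ is equivalent to a unique elementary $\partial_1$ (Barannikov); $a_i,a_j$ form a $\partial$-pair if $\partial_1(a_i)=a_j$, and an element is $\partial$-homologically essential if it lies in no $\partial$-pair. Let $B=\{b_1\prec\dots\prec b_K\}$, $B^k=\{b_1,\dots,b_k\}$, $\iota_*:H_*(\mathbb E(B^k),\partial_B)\to H_*(\mathbb E(B),\partial_B)$ induced by inclusion, and $\partial_*:H_{*+1}(\mathbb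 E(A),\mathbb E(B),\partial)\to H_*(\mathbb E(B),\partial_B)$ the connecting map of the long exact sequence of the pair. Set $I_k=\iota_*H_*(\mathbb E(B^k),\partial_B)\cap\partial_*H_*(\mathbb E(A),\mathbb E(B),\partial)$, $I_0=0$. An element $b_k$ is $\partial$-boundary homologically essential if $I_k\ne I_{k-1}$. *)

(* Defs.v *)
From HB Require Import structures.
From mathcomp Require Import all_boot all_order all_algebra.
Set Implicit Arguments.
Unset Strict Implicit.
Unset Printing Implicit Defensive.
Import GRing.Theory.
Local Open Scope ring_scope.

(* A = {a_1 < ... < a_N} is encoded as 'I_N (a_{i+1} <-> i),
   with the natural order of ordinals.  E(A) is the space of row vectors
   'rV[F]_N; a linear map f is the matrix M with  f v = v *m M, so the row
   M i is the coordinate vector of f(a_i): M i j = coefficient of a_j in f(a_i). *)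

Definition Mdiff (F : fieldType) (n : nat) (deg : 'I_n -> int) (D : 'M[F]_n) : Prop :=
  [/\ D *m D = 0,
      forall i j, D i j != 0 -> (j < i)%N &
      forall i j, D i j != 0 -> deg j = deg i - 1].

Definition flag_graded_aut (F : fieldType) (n : nat) (deg : 'I_n -> int) (P : 'M[F]_n) : Prop :=
  [/\ P \in unitmx,
      forall i j, P i j != 0 -> (j <= i)%N &
      forall i j, P i j != 0 -> deg j = deg i].

Definition elementary (F : fieldType) (n : nat) (D : 'M[F]_n) : Prop :=
  (forall i, (forall j, D i j = 0) \/
             exists j, D i j = 1 /\ forall j', j' != j -> D i j' = 0) /\
  (forall i i' j, D i j = 1 -> D i' j = 1 -> i = i').

(* a_i, a_j form a D-pair: the (unique, by Barannikov) elementary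
   differential D1 equivalent to D satisfies D1(a_i) = a_j *)
Definition Mpair (F : fieldType) (n : nat) (deg : 'I_n -> int) (D : 'M[F]_n)
    (i j : 'I_n) : Prop :=
  exists (P D1 : 'M[F]_n),
    [/\ flag_graded_aut deg P, D1 = invmx P *m D *m P, elementary D1 & D1 i j = 1].

Definition essential (F : fieldType) (n : nat) (deg : 'I_n -> int) (D : 'M[F]_n)
    (i : 'I_n) : Prop :=
  ~ (exists j, Mpair deg D i j \/ Mpair deg D j i).

Definition spanS (F : fieldType) (n : nat) (S : {set 'I_n}) : 'M[F]_n :=
  diag_mx (\row_i (i \in S)%:R).

Definition spanSd (F : fieldType) (n : nat) (deg : 'I_n -> int) (S : {set 'I_n}) (d : int)
  : 'M[F]_n := spanS F [set i in S | deg i == d].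

(* B = {b_1 < ... < b_K} with the induced order: b_{k+1} = enum_val k
   (enum B lists B in increasing order). *)
Definition subdiff (F : fieldType) (n : nat) (B : {set 'I_n}) (D : 'M[F]_n)
  : 'M[F]_#|B| := \matrix_(i, j) D (enum_val i) (enum_val j).

Definition subdeg (n : nat) (deg : 'I_n -> int) (B : {set 'I_n}) : 'I_#|B| -> int :=
  fun i => deg (enum_val i).

Definition initB (n : nat) (B : {set 'I_n}) (k : nat) : {set 'I_n} :=
  [set x in take k (enum B)].

(* Homology is encoded through the correspondence theorem: a subspace of
   H_*(E(B)) = Z(B)/Bd(B) is represented by its preimage in Z(B).
   - Z(B^k) = E(B^k) ∩ ker D ; preimage of iota_* H(E(B^k)) is Z(B^k) + Bd(B);
   - Bd(B) = D(E(B));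
   - preimage of im partial_* = { D x | x in E(A), D x in E(B) } = im D ∩ E(B).
   Ipre k is the preimage of I_k (Ipre 0 = Bd(B), i.e. I_0 = 0). *)
Definition Ipre (F : fieldType) (n : nat) (D : 'M[F]_n) (B : {set 'I_n}) (k : nat) : 'M[F]_n :=
  (((spanS F (initB B k) :&: kermx D) + spanS F B *m D) :&: (D :&: spanS F B))%MS.

(* b_{k+1} is D-boundary homologically essential: I_{k+1} <> I_k *)
Definition bd_essential (F : fieldType) (n : nat) (D : 'M[F]_n) (B : {set 'I_n})
    (k : 'I_#|B|) : bool :=
  ~~ (Ipre D B k.+1 == Ipre D B k)%MS.

(* dim partial_*(H_{d+1}(E(A),E(B))) inside H_d(E(B)) :
   preimage in Z_d(B) is (D(E_{d+1}(A)) ∩ E_d(B)) + D(E_{d+1}(B)),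
   and we subtract dim Bd_d(B) = dim D(E_{d+1}(B)). *)
Definition conn_image_dim (F : fieldType) (n : nat) (deg : 'I_n -> int) (D : 'M[F]_n)
    (B : {set 'I_n}) (d : int) : nat :=
  (\rank ((spanSd F deg setT (d + 1) *m D :&: spanSd F deg B d)
          + spanSd F deg B (d + 1) *m D)%MS
   - \rank (spanSd F deg B (d + 1) *m D))%N.

Arguments subdeg [n] deg B _.
Arguments bd_essential [F n] D B k.

(* Main.v *)
Require Import Defs.
From HB Require Import structures.
From mathcomp Require Import all_boot all_order all_algebra zify.
Set Implicit Arguments.
Unset Strict Implicit.
Unset Printing Implicit Defensive.
Import GRing.Theory.
Local Open Scope ring_scope.


Lemma sub_spanS (F : fieldType) m n (A : 'M[F]_(m, n)) (S : {set 'I_n}) :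
  (A <= spanS F S)%MS <-> (forall i j, j \notin S -> A i j = 0).
Proof.
split.
  case/submxP=> X ->{A} i j jS.
  by rewrite /spanS mul_mx_diag !mxE (negbTE jS) mulr0.
move=> HA.
have -> : A = A *m spanS F S.
  apply/matrixP=> i j; rewrite /spanS mul_mx_diag !mxE.
  by case: (boolP (j \in S)) => jS; rewrite ?mulr1 ?mulr0 // HA.
exact: submxMl.
Qed.

Lemma spanS_mul (F : fieldType) n (S T : {set 'I_n}) :
  spanS F S *m spanS F T = spanS F (S :&: T).
Proof.
rewrite /spanS mulmx_diag; congr diag_mx; apply/rowP=> j; rewrite !mxE inE.
by case: (j \in S); case: (j \in T); rewrite ?mulr1 ?mulr0.
Qed.

Lemma spanS_sub (F : fieldType) n (S T : {set 'I_n}) :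
  S \subset T -> (spanS F S <= spanS F T)%MS.
Proof.
move=> ST; apply/sub_spanS => i j jT; rewrite /spanS !mxE.
case: eqP => [->|]; last by rewrite mulr0n.
case: (boolP (j \in S)) => iS; last by rewrite mul0rn.
by rewrite (subsetP ST _ iS) in jT.
Qed.

Lemma row_spanS (F : fieldType) n (S : {set 'I_n}) i :
  row i (spanS F S) = (i \in S)%:R *: (delta_mx 0 i : 'rV[F]_n).
Proof. by rewrite /spanS row_diag_mx mxE. Qed.

Lemma delta_spanS (F : fieldType) n (S : {set 'I_n}) i :
  i \in S -> ((delta_mx 0 i : 'rV[F]_n) <= spanS F S)%MS.
Proof.
move=> iS; apply/sub_spanS => a j jS; rewrite mxE.
have ji : j != i by apply: contraNneq jS => ->.
by rewrite (negbTE ji) andbF.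
Qed.

Lemma spanS_setU1 (F : fieldType) n (S : {set 'I_n}) b :
  (spanS F (b |: S) <= spanS F S + (delta_mx 0 b : 'rV[F]_n))%MS.
Proof.
apply/row_subP=> i; rewrite row_spanS in_setU1.
case: eqP => [->|_] /=; first by rewrite scale1r addsmxSr.
case: (boolP (i \in S)) => iS; last by rewrite scale0r sub0mx.
by rewrite scale1r (submx_trans (delta_spanS F iS)) // addsmxSl.
Qed.

Lemma rank_spanS_setU1 (F : fieldType) n (S : {set 'I_n}) b :
  (\rank (spanS F (b |: S)) <= \rank (spanS F S) + 1)%N.
Proof.
apply: leq_trans (mxrankS (spanS_setU1 F S b)) _.
apply: leq_trans (mxrank_adds_leqif _ _) _.
by rewrite leq_add2l rank_leq_row.
Qed.


Lemma ext_adds (F : fieldType) m1 m2 m3 n (X : 'M[F]_(m1,n)) (X' : 'M_(m2,n)) (C : 'M_(m3,n)) :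
  (X <= X')%MS -> (\rank X' <= \rank X + 1)%N -> (\rank (X' + C) <= \rank (X + C) + 1)%N.
Proof.
move=> sXX' rX.
have h1 := mxrank_sum_cap X' C; have h2 := mxrank_sum_cap X C.
have h3 := mxrankS (capmxS sXX' (submx_refl C)).
lia.
Qed.

Lemma ext_cap (F : fieldType) m1 m2 m3 n (X : 'M[F]_(m1,n)) (X' : 'M_(m2,n)) (C : 'M_(m3,n)) :
  (X <= X')%MS -> (\rank X' <= \rank X + 1)%N -> (\rank (X' :&: C) <= \rank (X :&: C) + 1)%N.
Proof.
move=> sXX' rX.
have h1 := mxrank_sum_cap X' C; have h2 := mxrank_sum_cap X C.
have h3 := mxrankS (addsmxS sXX' (submx_refl C)).
lia.
Qed.

Lemma ext_mul (F : fieldType) m1 m2 n p (X : 'M[F]_(m1,n)) (X' : 'M_(m2,n)) (M : 'M_(n,p)) :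
  (X <= X')%MS -> (\rank X' <= \rank X + 1)%N -> (\rank (X' *m M) <= \rank (X *m M) + 1)%N.
Proof.
move=> sXX' rX.
have h1 := mxrank_mul_ker X' M; have h2 := mxrank_mul_ker X M.
have h3 := mxrankS (capmxS sXX' (submx_refl (kermx M))).
lia.
Qed.

Definition prj (F : fieldType) n (deg : 'I_n -> int) (P : pred int) : 'M[F]_n :=
  spanS F [set i | P (deg i)].

Lemma prj_D (F : fieldType) n (deg : 'I_n -> int) (D : 'M[F]_n) (P Q : pred int) :
  (forall i j, D i j != 0 -> deg j = deg i - 1) ->
  (forall e, P (e + 1) = Q e) ->
  prj F deg P *m D = D *m prj F deg Q.
Proof.
move=> Hdeg HPQ; apply/matrixP => i j.
rewrite /prj /spanS mul_diag_mx mul_mx_diag !mxE !inE.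
case: (eqVneq (D i j) 0) => [->|nz]; first by rewrite mulr0 mul0r.
by rewrite -HPQ (Hdeg _ _ nz) subrK mulrC.
Qed.

Lemma prj_D' (F : fieldType) n (deg : 'I_n -> int) (D : 'M[F]_n) (P : pred int) :
  (forall i j, D i j != 0 -> deg j = deg i - 1) ->
  prj F deg P *m D = D *m prj F deg (fun e => P (e + 1)).
Proof. by move=> H; apply: prj_D. Qed.

Lemma D_prj (F : fieldType) n (deg : 'I_n -> int) (D : 'M[F]_n) (Q : pred int) :
  (forall i j, D i j != 0 -> deg j = deg i - 1) ->
  D *m prj F deg Q = prj F deg (fun e => Q (e - 1)) *m D.
Proof. by move=> H; rewrite (prj_D (Q := Q)) // => e; rewrite addrK. Qed.

Lemma spanS_prj (F : fieldType) n (deg : 'I_n -> int) S P :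
  spanS F S *m prj F deg P = prj F deg P *m spanS F S.
Proof. by rewrite /prj !spanS_mul setIC. Qed.

Lemma graded_ker (F : fieldType) n (deg : 'I_n -> int) (D : 'M[F]_n) P :
  (forall i j, D i j != 0 -> deg j = deg i - 1) ->
  (kermx D *m prj F deg P <= kermx D)%MS.
Proof.
move=> H; apply/sub_kermxP.
by rewrite -mulmxA prj_D' // mulmxA mulmx_ker mul0mx.
Qed.

Lemma graded_D (F : fieldType) n (deg : 'I_n -> int) (D : 'M[F]_n) P :
  (forall i j, D i j != 0 -> deg j = deg i - 1) ->
  (D *m prj F deg P <= D)%MS.
Proof. by move=> H; rewrite D_prj // submxMl. Qed.

Lemma graded_spanS (F : fieldType) n (deg : 'I_n -> int) S P :
  (spanS F S *m prj F deg P <= spanS F S)%MS.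
Proof. by rewrite spanS_prj submxMl. Qed.

Lemma graded_SD (F : fieldType) n (deg : 'I_n -> int) (D : 'M[F]_n) S P :
  (forall i j, D i j != 0 -> deg j = deg i - 1) ->
  (spanS F S *m D *m prj F deg P <= spanS F S *m D)%MS.
Proof.
move=> H; rewrite -mulmxA D_prj // mulmxA spanS_prj -mulmxA submxMl //.
Qed.

Lemma graded_cap (F : fieldType) m1 m2 n p (X : 'M[F]_(m1,n)) (Y : 'M_(m2,n)) (M : 'M_(n,p)) :
  ((X :&: Y) *m M <= X *m M :&: Y *m M)%MS.
Proof. by rewrite sub_capmx !submxMr ?capmxSl ?capmxSr. Qed.

Lemma prj_idem (F : fieldType) n (deg : 'I_n -> int) P :
  prj F deg P *m prj F deg P = prj F deg P.
Proof. by rewrite /prj spanS_mul setIid. Qed.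

Lemma prj_compl (F : fieldType) n (deg : 'I_n -> int) P :
  prj F deg P + prj F deg (predC P) = 1%:M.
Proof.
apply/matrixP=> i j; rewrite /prj /spanS !mxE !inE.
by case: (P (deg i)); rewrite /= mul0rn ?addr0 ?add0r.
Qed.

Lemma split_prj (F : fieldType) m n (deg : 'I_n -> int) (X : 'M[F]_(m, n)) P :
  (X <= X *m prj F deg P + X *m prj F deg (predC P))%MS.
Proof.
by rewrite -[X in (X <= _)%MS]mulmx1 -(prj_compl F deg P) mulmxDr addmx_sub_adds.
Qed.


Lemma initB_mono n (B : {set 'I_n}) k : initB B k \subset initB B k.+1.
Proof.
apply/subsetP => x; rewrite !inE => xk.
have xs := mem_take xk.
rewrite in_take //; rewrite in_take // in xk; lia.
Qed.

Lemma initB_S n (B : {set 'I_n}) (k : 'I_#|B|) :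
  initB B k.+1 = enum_val k |: initB B k.
Proof.
apply/setP => x; rewrite !inE (take_nth (enum_val k)) ?mem_rcons ?in_cons.
  by rewrite -enum_val_nth.
by rewrite -cardE ltn_ord.
Qed.

Lemma initB_val n (B : {set 'I_n}) (k : 'I_#|B|) m :
  (enum_val k \in initB B m) = (k < m)%N.
Proof.
rewrite inE in_take ?mem_enum ?enum_valP //.
rewrite (enum_val_nth (enum_val k)) index_uniq ?enum_uniq // -cardE ltn_ord //.
Qed.

Lemma initB0 n (B : {set 'I_n}) : initB B 0 = set0.
Proof. by apply/setP => x; rewrite !inE take0. Qed.

Lemma initBK n (B : {set 'I_n}) : initB B #|B| = B.
Proof. by apply/setP => x; rewrite inE cardE take_size mem_enum. Qed.

Lemma spanS0 (F : fieldType) n : spanS F (set0 : {set 'I_n}) = 0.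
Proof. by apply/matrixP => i j; rewrite /spanS !mxE inE mul0rn. Qed.

Definition IpreS (F : fieldType) n (D : 'M[F]_n) (B S : {set 'I_n}) : 'M[F]_n :=
  (((spanS F S :&: kermx D) + spanS F B *m D) :&: (D :&: spanS F B))%MS.

Lemma IpreE (F : fieldType) n (D : 'M[F]_n) (B : {set 'I_n}) k :
  Ipre D B k = IpreS D B (initB B k).
Proof. by []. Qed.

Lemma IpreS_mono (F : fieldType) n (D : 'M[F]_n) (B S S' : {set 'I_n}) :
  S \subset S' -> (IpreS D B S <= IpreS D B S')%MS.
Proof.
move=> sS; rewrite /IpreS capmxS // addsmxS // capmxS //.
exact: spanS_sub.
Qed.

Lemma IpreS_pi (F : fieldType) n (deg : 'I_n -> int) (D : 'M[F]_n) (B S S' : {set 'I_n}) P :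
  (forall i j, D i j != 0 -> deg j = deg i - 1) ->
  (spanS F S *m prj F deg P <= spanS F S')%MS ->
  (IpreS D B S *m prj F deg P <= IpreS D B S')%MS.
Proof.
move=> Hdeg sS; rewrite /IpreS.
apply: submx_trans (graded_cap _ _ _) _; apply: capmxS.
  rewrite addsmxMr addsmxS ?graded_SD //.
  apply: submx_trans (graded_cap _ _ _) _.
  by rewrite capmxS ?graded_ker.
apply: submx_trans (graded_cap _ _ _) _.
by apply: capmxS; [exact: graded_D | exact: graded_spanS].
Qed.

Lemma Bd_W (F : fieldType) n (D : 'M[F]_n) (B : {set 'I_n}) :
  (forall i j, i \in B -> D i j != 0 -> j \in B) ->
  (spanS F B *m D <= D :&: spanS F B)%MS.
Proof.
move=> HB; rewrite sub_capmx submxMl /=; apply/sub_spanS => i j jB.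
rewrite /spanS mul_diag_mx !mxE.
case: (boolP (i \in B)) => iB; last by rewrite mul0r.
case: (eqVneq (D i j) 0) => [->|nz]; first by rewrite mulr0.
by rewrite (HB _ _ iB nz) in jB.
Qed.

Lemma Ipre0 (F : fieldType) n (D : 'M[F]_n) (B : {set 'I_n}) :
  (forall i j, i \in B -> D i j != 0 -> j \in B) ->
  (Ipre D B 0 == spanS F B *m D)%MS.
Proof.
move=> HB; rewrite IpreE /IpreS initB0 spanS0; apply/andP; split.
  apply: submx_trans (capmxSl _ _) _; rewrite addsmx_sub; apply/andP; split=> //.
  by apply: submx_trans (capmxSl _ _) _; rewrite sub0mx.
by rewrite sub_capmx addsmxSr Bd_W.
Qed.

Lemma IpreK (F : fieldType) n (D : 'M[F]_n) (B : {set 'I_n}) :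
  D *m D = 0 ->
  (Ipre D B #|B| == D :&: spanS F B)%MS.
Proof.
move=> DD; rewrite IpreE /IpreS initBK; apply/andP; split; first exact: capmxSr.
rewrite sub_capmx submx_refl andbT; apply: submx_trans (addsmxSl _ _).
rewrite sub_capmx capmxSr /=.
apply: submx_trans (capmxSl _ _) _; apply/sub_kermxP; exact: DD.
Qed.

Lemma step_off (F : fieldType) n (deg : 'I_n -> int) (D : 'M[F]_n) (B : {set 'I_n})
    (k : 'I_#|B|) P :
  (forall i j, D i j != 0 -> deg j = deg i - 1) ->
  ~~ P (deg (enum_val k)) -> (Ipre D B k.+1 *m prj F deg P <= Ipre D B k)%MS.
Proof.
move=> Hdeg nP; rewrite !IpreE; apply: IpreS_pi => //.
rewrite /prj spanS_mul; apply: spanS_sub; apply/subsetP => x.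
rewrite initB_S !inE => /andP[/predU1P[->|//] Px].
by rewrite Px in nP.
Qed.

Lemma graded_Ipre (F : fieldType) n (deg : 'I_n -> int) (D : 'M[F]_n) (B : {set 'I_n}) k P :
  (forall i j, D i j != 0 -> deg j = deg i - 1) ->
  (Ipre D B k *m prj F deg P <= Ipre D B k)%MS.
Proof. by move=> Hdeg; rewrite !IpreE; apply: IpreS_pi => //; apply: graded_spanS. Qed.

Lemma Ipre_mono (F : fieldType) n (D : 'M[F]_n) (B : {set 'I_n}) k :
  (Ipre D B k <= Ipre D B k.+1)%MS.
Proof. by rewrite !IpreE; apply: IpreS_mono; apply: initB_mono. Qed.

Lemma step_rank (F : fieldType) n (deg : 'I_n -> int) (D : 'M[F]_n) (B : {set 'I_n})
    (k : 'I_#|B|) P :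
  (\rank (Ipre D B k.+1 *m prj F deg P) <= \rank (Ipre D B k *m prj F deg P) + 1)%N.
Proof.
rewrite !IpreE /IpreS.
have s0 : (spanS F (initB B k) <= spanS F (initB B k.+1))%MS.
  by apply: spanS_sub; apply: initB_mono.
have r0 : (\rank (spanS F (initB B k.+1)) <= \rank (spanS F (initB B k)) + 1)%N.
  by rewrite initB_S; apply: rank_spanS_setU1.
have s1 := capmxS s0 (submx_refl (kermx D)).
have r1 := ext_cap (kermx D) s0 r0.
have s2 := addsmxS s1 (submx_refl (spanS F B *m D)).
have r2 := ext_adds (spanS F B *m D) s1 r1.
have s3 := capmxS s2 (submx_refl (D :&: spanS F B)%MS).
have r3 := ext_cap (D :&: spanS F B)%MS s2 r2.
exact: ext_mul.
Qed.

Lemma step_eq (F : fieldType) n (deg : 'I_n -> int) (D : 'M[F]_n) (B : {set 'I_n})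
    (k : 'I_#|B|) :
  (forall i j, D i j != 0 -> deg j = deg i - 1) ->
  \rank (Ipre D B k.+1 *m prj F deg (pred1 (deg (enum_val k)))) =
  \rank (Ipre D B k *m prj F deg (pred1 (deg (enum_val k)))) ->
  (Ipre D B k.+1 <= Ipre D B k)%MS.
Proof.
move=> Hdeg req; set P := pred1 _ in req.
have sub1 : (Ipre D B k *m prj F deg P <= Ipre D B k.+1 *m prj F deg P)%MS.
  exact/submxMr/Ipre_mono.
have sub2 : (Ipre D B k.+1 *m prj F deg P <= Ipre D B k *m prj F deg P)%MS.
  by rewrite -(mxrank_leqif_sup sub1).2 req.
apply: submx_trans (split_prj _ _ P) _; rewrite addsmx_sub; apply/andP; split.
  by apply: submx_trans sub2 _; apply: graded_Ipre.
by apply: step_off => //=; rewrite negbK.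
Qed.

Lemma incr (F : fieldType) n (deg : 'I_n -> int) (D : 'M[F]_n) (B : {set 'I_n})
    (k : 'I_#|B|) d :
  (forall i j, D i j != 0 -> deg j = deg i - 1) ->
  (\rank (Ipre D B k.+1 *m prj F deg (pred1 d)) - \rank (Ipre D B k *m prj F deg (pred1 d)))%N
  = (bd_essential D B k && (deg (enum_val k) == d)).
Proof.
move=> Hdeg.
have mono := mxrankS (submxMr (prj F deg (pred1 d)) (Ipre_mono D B k)).
rewrite /bd_essential.
case: (eqVneq (deg (enum_val k)) d) => [e|ne]; first subst d.
  have sr := step_rank deg D k (pred1 (deg (enum_val k))).
  rewrite andbT.
  set r1 := \rank _ in sr mono *; set r0 := \rank _ in sr mono *.
  case: (eqVneq r1 r0) => [eq|neq].
    have s := step_eq Hdeg eq.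
    have -> : (Ipre D B k.+1 == Ipre D B k)%MS by rewrite s Ipre_mono.
    by rewrite eq subnn.
  have -> : (Ipre D B k.+1 == Ipre D B k)%MS = false.
    apply/negP => /eqmxP e; move: neq; rewrite /r1 /r0.
    by rewrite (eqmxMr _ e) eqxx.
  move/eqP: neq => neq; have -> : r1 = r0.+1 by lia.
  by rewrite subSnn.
rewrite andbF.
have np : ~~ pred1 d (deg (enum_val k)) by [].
have s := @step_off F n deg D B k (pred1 d) Hdeg np.
have s' : (Ipre D B k.+1 *m prj F deg (pred1 d) <= Ipre D B k *m prj F deg (pred1 d))%MS.
  by rewrite -{1}prj_idem mulmxA; apply: submxMr; apply: s.
have := mxrankS s'; lia.
Qed.

Lemma D_prj_d (F : fieldType) n (deg : 'I_n -> int) (D : 'M[F]_n) d :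
  (forall i j, D i j != 0 -> deg j = deg i - 1) ->
  D *m prj F deg (pred1 d) = spanSd F deg setT (d + 1) *m D.
Proof.
move=> Hdeg; rewrite D_prj //; congr (_ *m D); rewrite /prj /spanSd; congr spanS.
by apply/setP => i; rewrite !inE subr_eq.
Qed.

Lemma spanS_prj_d (F : fieldType) n (deg : 'I_n -> int) (B : {set 'I_n}) d :
  spanS F B *m prj F deg (pred1 d) = spanSd F deg B d.
Proof. by rewrite /prj spanS_mul /spanSd; congr spanS; apply/setP => i; rewrite !inE. Qed.

Lemma spanS_setT_d (F : fieldType) n (deg : 'I_n -> int) (B : {set 'I_n}) d :
  spanS F B *m spanSd F deg setT d = spanSd F deg B d.
Proof. by rewrite /spanSd spanS_mul; congr spanS; apply/setP => i; rewrite !inE. Qed.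

Lemma prj_absorb (F : fieldType) m p n (deg : 'I_n -> int) (Y : 'M[F]_(m, n)) (X : 'M[F]_(p, n)) P :
  (Y <= X *m prj F deg P)%MS -> Y *m prj F deg P = Y.
Proof. by case/submxP => Z ->; rewrite -!mulmxA prj_idem. Qed.

Lemma part2 (F : fieldType) (N : nat) (deg : 'I_N -> int) (D : 'M[F]_N)
    (B : {set 'I_N}) :
  Mdiff deg D ->
  (forall i j, i \in B -> D i j != 0 -> j \in B) ->
  (forall d : int,
     #|[set k : 'I_#|B| | bd_essential D B k && (subdeg deg B k == d)]|
       = conn_image_dim deg D B d).
Proof.
case=> [DD Dlt Ddeg] HB d.
pose r m := \rank (Ipre D B m *m prj F deg (pred1 d)).
have card : #|[set k : 'I_#|B| | bd_essential D B k && (subdeg deg B k == d)]|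
            = (\sum_(k < #|B|) (r k.+1 - r k))%N.
  rewrite -sum1_card big_mkcond /=; apply: eq_bigr => k _.
  by rewrite inE /r incr //; case: (_ && _).
rewrite card -(big_mkord xpredT (fun k => (r k.+1 - r k)%N)) telescope_sumn_in //; last first.
  by move=> i _; apply/mxrankS/submxMr/Ipre_mono.
rewrite /conn_image_dim /r (eqmxMr _ (eqmxP (Ipre0 HB))) (eqmxMr _ (eqmxP (IpreK B DD))).


rewrite -mulmxA (D_prj_d (D := D)) // mulmxA spanS_setT_d.
set Bd := spanSd F deg B (d + 1) *m D.
set cap := (spanSd F deg setT (d + 1) *m D :&: spanSd F deg B d)%MS.
have Weq : ((D :&: spanS F B)%MS *m prj F deg (pred1 d) == cap)%MS.
  apply/andP; split.
    by apply: submx_trans (graded_cap _ _ _) _; rewrite D_prj_d // spanS_prj_d.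
  have sY : (cap <= D *m prj F deg (pred1 d))%MS by rewrite D_prj_d // capmxSl.
  rewrite -(prj_absorb sY) submxMr // capmxS //.
    exact: submxMl.
  by rewrite -(spanS_prj_d F deg B d) graded_spanS.
have sBd : (Bd <= cap)%MS.
  have -> : Bd = spanS F B *m D *m prj F deg (pred1 d).
    by rewrite /Bd -mulmxA (D_prj_d (D := D)) // mulmxA spanS_setT_d.
  apply: submx_trans (submxMr _ (Bd_W HB)) _.
  by case/andP: Weq.
by rewrite (eqmx_rank Weq) (addsmx_idPl sBd).
Qed.


Definition Lm (F : fieldType) K (m : nat) : 'M[F]_K := spanS F [set i : 'I_K | (i < m)%N].

Lemma spanS_absorb (F : fieldType) p n (Y : 'M[F]_(p, n)) S :
  (Y <= spanS F S)%MS -> Y *m spanS F S = Y.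
Proof.
move/sub_spanS => H; apply/matrixP => i j; rewrite /spanS mul_mx_diag !mxE.
by case: (boolP (j \in S)) => jS; rewrite ?mulr1 ?mulr0 // H.
Qed.

Lemma elem_row (F : fieldType) K (D1 : 'M[F]_K) i j :
  elementary D1 -> D1 i j = 1 -> row i D1 = delta_mx 0 j.
Proof.
case=> E1 E2 h; apply/rowP => l; rewrite !mxE.
case: (E1 i) => [z | [j' [h1 h2]]]; first by move: h; rewrite z => /esym/eqP; rewrite oner_eq0.
have ej : j' = j.
  apply/eqP; apply: contraT => ne; move: h; rewrite h2 1?eq_sym // => /esym/eqP.
  by rewrite oner_eq0.
subst j'; case: (eqVneq l j) => [->|ne]; first by rewrite h1.
by rewrite h2.
Qed.

Lemma elem_col (F : fieldType) K (D1 : 'M[F]_K) i j i' :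
  elementary D1 -> D1 i j = 1 -> i' != i -> D1 i' j = 0.
Proof.
case=> E1 E2 h ne.
case: (E1 i') => [z | [j' [h1 h2]]]; first exact: z.
case: (eqVneq j j') => [e|nj]; last exact: h2.
by subst j'; rewrite (E2 _ _ _ h1 h) eqxx in ne.
Qed.

Lemma Lm_P (F : fieldType) K (P : 'M[F]_K) m :
  (forall i j, P i j != 0 -> (j <= i)%N) -> (Lm F K m *m P <= Lm F K m)%MS.
Proof.
move=> HP; apply/sub_spanS => i j; rewrite /Lm /spanS mul_diag_mx !mxE !inE -leqNgt => mj.
case: (ltnP i m) => im; last by rewrite mul0r.
case: (eqVneq (P i j) 0) => [->|nz]; first by rewrite mulr0.
have := HP _ _ nz; lia.
Qed.

Lemma Lm_Q (F : fieldType) K (P : 'M[F]_K) m :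
  P \in unitmx -> (forall i j, P i j != 0 -> (j <= i)%N) -> (Lm F K m *m invmx P <= Lm F K m)%MS.
Proof.
move=> uP HP; have s := Lm_P m HP.
have s' : (Lm F K m <= Lm F K m *m P)%MS.
  by rewrite -(mxrank_leqif_sup s).2 mxrankMfree // row_free_unit.
by apply: submx_trans (submxMr _ s') _; rewrite mulmxK.
Qed.

Definition Xm (F : fieldType) K (DB : 'M[F]_K) m : 'M[F]_K := (Lm F K m :&: kermx DB)%MS.

Lemma caseA (F : fieldType) K (DB P D1 : 'M[F]_K) (k j : 'I_K) :
  P \in unitmx -> (forall i j, P i j != 0 -> (j <= i)%N) ->
  D1 = invmx P *m DB *m P -> elementary D1 -> D1 k j = 1 ->
  (Xm DB k.+1 <= Xm DB k)%MS.
Proof.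
move=> uP HP eD1 el h.
set X := Xm DB k.+1; set Y := X *m P.
have XY : X = Y *m invmx P by rewrite /Y mulmxK.
have PD1 : P *m D1 = DB *m P by rewrite eD1 !mulmxA mulmxV // mul1mx.
have YD1 : Y *m D1 = 0.
  rewrite /Y -mulmxA PD1 mulmxA.
  have : (X <= kermx DB)%MS by apply: capmxSr.
  by move/sub_kermxP => ->; rewrite mul0mx.
have YL : (Y <= Lm F K k)%MS.
  apply/sub_spanS => r l; rewrite inE -leqNgt => kl.
  have YL1 : (Y <= Lm F K k.+1)%MS.
    by apply: submx_trans (submxMr _ (capmxSl _ _)) (Lm_P _ HP).
  case: (ltngtP l k) => [lk|kl'|/val_inj lk]; first by lia.
    by move/sub_spanS: YL1; apply; rewrite inE -leqNgt.
  subst l.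
  have e : (Y *m D1) r j = Y r k.
    rewrite mxE (bigD1 k) //= h mulr1 big1 ?addr0 // => i ik.
    by rewrite (elem_col el h ik) mulr0.
  by rewrite -e YD1 mxE.
rewrite /Xm sub_capmx capmxSr andbT XY.
by apply: submx_trans (submxMr _ YL) (Lm_Q _ uP HP).
Qed.

Lemma Lm_split (F : fieldType) K (k : 'I_K) :
  Lm F K k.+1 = Lm F K k + delta_mx k k.
Proof.
apply/matrixP => a b; rewrite /Lm /spanS !mxE !inE.
case: (eqVneq a b) => [<-|ne]; rewrite ?mulr1n ?mulr0n.
  rewrite andbb ltnS leq_eqVlt.
  case: (ltngtP a k) => [lt|gt|eq]; rewrite ?orbT ?orbF /=.
  - by rewrite (_ : (a == k) = false) ?addr0 //; apply/eqP => e; rewrite e ltnn in lt.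
  - by rewrite (_ : (a == k) = false) ?addr0 //; apply/eqP => e; rewrite e ltnn in gt.
  - by rewrite (val_inj eq) eqxx add0r.
case: (eqVneq a k) => [ak|]; last by rewrite add0r.
case: (eqVneq b k) => [bk|]; last by rewrite add0r.
by move: ne; rewrite ak bk eqxx.
Qed.

Lemma caseB (F : fieldType) K (DB P D1 : 'M[F]_K) (k j : 'I_K) :
  DB *m DB = 0 ->
  P \in unitmx -> (forall i j, P i j != 0 -> (j <= i)%N) ->
  D1 = invmx P *m DB *m P -> elementary D1 -> D1 j k = 1 ->
  (Xm DB k.+1 <= Xm DB k + row k (invmx P))%MS /\
  row k (invmx P) = row j (invmx P) *m DB.
Proof.
move=> DB2 uP HP eD1 el h.
set Q := invmx P.
have QDB : Q *m DB = D1 *m Q by rewrite eD1 mulmxK.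
have qk : row k Q = row j Q *m DB.
  by rewrite -row_mul QDB row_mul (elem_row el h) -rowE.
split=> //.
have qk0 : row k Q *m DB = 0 by rewrite qk -mulmxA DB2 mulmx0.
set X := Xm DB k.+1; set Y := X *m P.
have XY : X = Y *m Q by rewrite /Y mulmxK.
have YL1 : (Y <= Lm F K k.+1)%MS.
  by apply: submx_trans (submxMr _ (capmxSl _ _)) (Lm_P _ HP).
have XK : X *m DB = 0 by apply/sub_kermxP; apply: capmxSr.
set T := Y *m Lm F K k *m Q.
set U := Y *m delta_mx k 0 *m row k Q.
have XTU : X = T + U.
  rewrite XY -(spanS_absorb YL1) -/(Lm F K k.+1) Lm_split mulmxDr mulmxDl.
  by rewrite /T /U rowE -(mul_delta_mx (0 : 'I_1) k k) !mulmxA.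
have UDB : U *m DB = 0 by rewrite /U -mulmxA qk0 mulmx0.
have TX : (T <= Xm DB k)%MS.
  rewrite /Xm sub_capmx; apply/andP; split.
    by rewrite /T -mulmxA (submx_trans (submxMl _ _) (Lm_Q _ uP HP)).
  apply/sub_kermxP.
  have -> : T = X - U by rewrite XTU addrK.
  by rewrite mulmxBl XK UDB subrr.
rewrite XTU addmx_sub_adds // /U submxMl //.
Qed.


Definition Smx (F : fieldType) n (B : {set 'I_n}) : 'M[F]_(#|B|, n) :=
  \matrix_(i, x) (enum_val i == x)%:R.

Lemma sum_pick (F : fieldType) n (f : 'I_n -> F) (y : 'I_n) :
  \sum_x (y == x)%:R * f x = f y.
Proof.
rewrite (bigD1 y) //= eqxx mul1r big1 ?addr0 // => x ne.
by rewrite eq_sym (negbTE ne) mul0r.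
Qed.

Lemma sum_pick_r (F : fieldType) n (f : 'I_n -> F) (y : 'I_n) :
  \sum_x f x * (y == x)%:R = f y.
Proof. by rewrite -(sum_pick f y); apply: eq_bigr => x _; rewrite mulrC. Qed.

Lemma sumB_pick_in (F : fieldType) n (B : {set 'I_n}) (f : 'I_#|B| -> F) (x : 'I_n)
    (xB : x \in B) :
  \sum_l f l * (enum_val l == x)%:R = f (enum_rank_in xB x).
Proof.
rewrite (bigD1 (enum_rank_in xB x)) //= enum_rankK_in // eqxx mulr1 big1 ?addr0 // => l ne.
case: (eqVneq (enum_val l) x) => [e|]; last by rewrite mulr0.
suff el : l = enum_rank_in xB x by rewrite el eqxx in ne.
by apply: enum_val_inj; rewrite enum_rankK_in.
Qed.

Lemma sumB_pick_out (F : fieldType) n (B : {set 'I_n}) (f : 'I_#|B| -> F) (x : 'I_n) :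
  x \notin B -> \sum_l f l * (enum_val l == x)%:R = 0.
Proof.
move=> xB; rewrite big1 // => l _.
case: (eqVneq (enum_val l) x) => [e|]; last by rewrite mulr0.
by move: xB; rewrite -e enum_valP.
Qed.

Lemma SD (F : fieldType) n (D : 'M[F]_n) (B : {set 'I_n}) :
  (forall i j, i \in B -> D i j != 0 -> j \in B) ->
  Smx F B *m D = subdiff B D *m Smx F B.
Proof.
move=> HB; apply/matrixP => i x; rewrite !mxE.
under eq_bigr do rewrite mxE.
rewrite sum_pick.
under [RHS]eq_bigr do rewrite !mxE.
case: (boolP (x \in B)) => xB.
  by rewrite (sumB_pick_in (fun l => D (enum_val i) (enum_val l)) xB) enum_rankK_in.
rewrite sumB_pick_out //.
apply/eqP; apply: contraNT xB; exact: HB (enum_valP i).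
Qed.

Lemma SSt (F : fieldType) n (B : {set 'I_n}) :
  Smx F B *m (Smx F B)^T = 1%:M.
Proof.
apply/matrixP => i i'; rewrite !mxE.
under eq_bigr do rewrite !mxE.
rewrite (sum_pick (fun x => (enum_val i' == x)%:R)).
by rewrite (inj_eq enum_val_inj) eq_sym.
Qed.

Lemma StS (F : fieldType) n (B : {set 'I_n}) :
  (Smx F B)^T *m Smx F B = spanS F B.
Proof.
apply/matrixP => x y; rewrite /spanS !mxE.
under eq_bigr do rewrite !mxE.
case: (boolP (x \in B)) => xB.
  under eq_bigr do rewrite mulrC.
  rewrite (sumB_pick_in (fun l => (enum_val l == y)%:R) xB) enum_rankK_in //.
under eq_bigr do rewrite mulrC.
by rewrite sumB_pick_out // mul0rn.
Qed.

Lemma DB2 (F : fieldType) n (D : 'M[F]_n) (B : {set 'I_n}) :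
  (forall i j, i \in B -> D i j != 0 -> j \in B) -> D *m D = 0 ->
  subdiff B D *m subdiff B D = 0.
Proof.
move=> HB DD.
have h : subdiff B D *m subdiff B D *m Smx F B = 0.
  by rewrite -mulmxA -SD // mulmxA -SD // -mulmxA DD mulmx0.
by rewrite -[LHS]mulmx1 -(SSt F B) mulmxA h mul0mx.
Qed.

Lemma MS_sub (F : fieldType) m n (B : {set 'I_n}) (M : 'M[F]_(m, #|B|)) :
  (M *m Smx F B <= spanS F B)%MS.
Proof.
apply/sub_spanS => i x xB; rewrite mxE.
under eq_bigr do rewrite mxE.
exact: sumB_pick_out.
Qed.

Lemma LS_sub (F : fieldType) n (B : {set 'I_n}) m :
  (Lm F #|B| m *m Smx F B <= spanS F (initB B m))%MS.
Proof.
apply/sub_spanS => i x xI; rewrite /Lm /spanS mul_diag_mx !mxE inE.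
case: (eqVneq (enum_val i) x) => [e|]; last by rewrite mulr0.
by move: xI; rewrite -e initB_val; case: (i < m)%N; rewrite ?mul0r.
Qed.

Definition Zbig (F : fieldType) n (D : 'M[F]_n) (B : {set 'I_n}) m : 'M[F]_n :=
  (spanS F (initB B m) :&: kermx D)%MS.

Lemma Zbig_sub (F : fieldType) n (D : 'M[F]_n) (B : {set 'I_n}) m :
  (forall i j, i \in B -> D i j != 0 -> j \in B) ->
  (Zbig D B m <= Xm (subdiff B D) m *m Smx F B)%MS.
Proof.
move=> HB; set Z := Zbig D B m.
have ZI : (Z <= spanS F (initB B m))%MS by apply: capmxSl.
have ZB : (Z <= spanS F B)%MS.
  apply: submx_trans ZI (spanS_sub _ _); apply/subsetP => x.
  by rewrite inE => /mem_take; rewrite mem_enum.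
have ZK : Z *m D = 0 by apply/sub_kermxP; apply: capmxSr.
have -> : Z = Z *m (Smx F B)^T *m Smx F B by rewrite -mulmxA StS spanS_absorb.
apply: submxMr; rewrite /Xm sub_capmx; apply/andP; split.
  apply/sub_spanS => r i; rewrite inE -leqNgt => mi; rewrite mxE.
  under eq_bigr do rewrite /Smx !mxE.
  rewrite (sum_pick_r (Z r) (enum_val i)).
  by move/sub_spanS: ZI; apply; rewrite initB_val -leqNgt.
apply/sub_kermxP.
rewrite -[LHS]mulmx1 -(SSt F B) mulmxA -[_ *m subdiff B D *m _]mulmxA -SD //.
by rewrite mulmxA -(mulmxA Z) StS spanS_absorb // ZK !mul0mx.
Qed.

Lemma Xm_sub (F : fieldType) n (D : 'M[F]_n) (B : {set 'I_n}) m :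
  (forall i j, i \in B -> D i j != 0 -> j \in B) ->
  (Xm (subdiff B D) m *m Smx F B <= Zbig D B m)%MS.
Proof.
move=> HB; rewrite /Zbig sub_capmx; apply/andP; split.
  by apply: submx_trans (submxMr _ (capmxSl _ _)) _; apply: LS_sub.
apply/sub_kermxP; rewrite -mulmxA SD // mulmxA.
have : (Xm (subdiff B D) m <= kermx (subdiff B D))%MS by apply: capmxSr.
by move/sub_kermxP => ->; rewrite mul0mx.
Qed.

Lemma no_jump (F : fieldType) n (D : 'M[F]_n) (B : {set 'I_n}) (k : nat) :
  (Zbig D B k.+1 <= Zbig D B k + spanS F B *m D)%MS ->
  (Ipre D B k.+1 <= Ipre D B k)%MS.
Proof.
move=> h; rewrite !IpreE /IpreS capmxS // addsmx_sub addsmxSr andbT.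
exact: h.
Qed.

Lemma part1 (F : fieldType) (N : nat) (deg : 'I_N -> int) (D : 'M[F]_N)
    (B : {set 'I_N}) :
  Mdiff deg D ->
  (forall i j, i \in B -> D i j != 0 -> j \in B) ->
  (forall k : 'I_#|B|, bd_essential D B k -> essential (subdeg deg B) (subdiff B D) k).
Proof.
case=> [DD _ _] HB k bd [j pr].
suff : (Ipre D B k.+1 <= Ipre D B k)%MS by move: bd; rewrite /bd_essential => /negP; rewrite Ipre_mono andbT.
apply: no_jump.
have ZS := @Zbig_sub F N D B k.+1 HB.
have XS := @Xm_sub F N D B k HB.
have DB0 := DB2 HB DD.
case: pr => [[P [D1 [[uP HP _] eD1 el h]]] | [P [D1 [[uP HP _] eD1 el h]]]].
  have XX := caseA uP HP eD1 el h.
  apply: submx_trans ZS _; apply: submx_trans (addsmxSl _ _).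
  by apply: submx_trans (submxMr _ XX) XS.
have [XX qk] := caseB DB0 uP HP eD1 el h.
apply: submx_trans ZS _; apply: submx_trans (submxMr _ XX) _.
rewrite addsmxMr addsmxS // qk -mulmxA -SD // mulmxA.
by apply: submxMr; apply: MS_sub.
Qed.

Unset Implicit Arguments.
Set Strict Implicit.

Theorem lemma3p3 (F : fieldType) (N : nat) (deg : 'I_N -> int) (D : 'M[F]_N)
    (B : {set 'I_N}) :
  Mdiff deg D ->
  (forall i j, i \in B -> D i j != 0 -> j \in B) ->
  (forall k : 'I_#|B|, bd_essential D B k -> essential (subdeg deg B) (subdiff B D) k) /\
  (forall d : int,
     #|[set k : 'I_#|B| | bd_essential D B k && (subdeg deg B k == d)]|
       = conn_image_dim deg D B d).
Proof.
move=> HD HB; split; [exact: part1 | exact: part2].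
Qed.
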